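(* Let $A$ be a set with $n$ elements. The $\square$-map $p_A:Y^A\to\tilde Z_n$, $p_A(c,<)=z^k_{|c^{-1}(1)|}$ for $(c,<)\in Y^A[k]$, is $\Sigma_A$-invariant, and the induced $\square$-map $Y^A/\Sigma_A\to\tilde Z_n$ from the orbit $\square$-set (with $(Y^A/\Sigma_A)[k]=Y^A[k]/\Sigma_A$) is an isomorphism of $\square$-sets.
   Context: A precubical set ($\square$-set) $K$ is a sequence of pairwise disjoint sets $(K[n])_{n\ge0}$ with face maps $d^\varepsilon_i:K[n]\to K[n-1]$ ($1\le i\le n$, $\varepsilon\in\{0,1\}$) satisfying $d^\varepsilon_i d^\eta_j=d^\eta_{j-1}d^\varepsilon_i$ for $i<j$; $\square$-maps are families of maps $K[n]\to L[n]$ commuting with face maps. $\tilde Z_n$ is the $\square$-set with $\tilde Z_n[k]=\{z^k_j:0\le j\le n-k\}$ ($\emptyset$ for $k>n$) and $d^\varepsilon_i(z^k_j)=z^{k-1}_{j+\varepsilon}$. $Y^A$ is the $\square$-set where $Y^A[k]$ is the set of pairs $(c,<)$ with $c:A\to\{0,*,1\}$, $|c^{-1}( * )|=k$, and $<$ a strict total order on $c^{-1}( * )$; if $c^{-1}( * )=\{a_1<\dots<a_k\}$ then $d^\varepsilon_i(c,<)=(c',<')$ where $c'(a_i)=\varepsilon$, $c'=c$ elsewhere, and $<'$ is the restriction of $<$ to $c^{-1}( * )\setminus\{a_i\}$. $\Sigma_A$ acts on $Y^A$ from the right by $(c,<)\sigma=(c\circ\sigma,<\sigma)$, where $a\,(<\sigma)\,b$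 iff $\sigma(a)<\sigma(b)$. *)

(* Defs.v *)
From mathcomp Require Import all_boot all_fingroup.
Set Implicit Arguments. Unset Strict Implicit. Unset Printing Implicit Defensive.

(* Coordinates c : A -> {0,*,1} are encoded as option bool:
   Some false = 0, None = *, Some true = 1.
   A strict total order < on c^{-1}( * ) is encoded as a relation r on A
   (r a b  means  a < b) relating only elements of c^{-1}( * ). *)
Definition coord (A : finType) := {ffun A -> option bool}.
Definition rawY (A : finType) := (coord A * {ffun A -> {ffun A -> bool}})%type.

Section Y.
Variable A : finType.

Definition starset (x : rawY A) : {set A} := [set a | x.1 a == None].
Definition oneset (x : rawY A) : {set A} := [set a | x.1 a == Some true].

Definition wfY (x : rawY A) : bool :=
  [&& [forall a, forall b, x.2 a b ==> (a \in starset x) && (b \in starset x)],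
      [forall a, ~~ x.2 a a],
      [forall a, forall b, forall d, x.2 a b && x.2 b d ==> x.2 a d] &
      [forall a, forall b, (a \in starset x) && (b \in starset x) && (a != b)
                            ==> x.2 a b || x.2 b a]].

Definition Ylev (k : nat) : {set rawY A} :=
  [set x | wfY x & #|starset x| == k].

(* the (i+1)-th element a_{i+1} of c^{-1}( * ) w.r.t. < (i is 0-indexed) *)
Definition ith (i : nat) (x : rawY A) : option A :=
  [pick a | (a \in starset x) && (#|[set b | x.2 b a]| == i)].

(* face map d^e_{i+1} (0-indexed i) *)
Definition faceY (i : nat) (e : bool) (x : rawY A) : rawY A :=
  match ith i x with
  | Some a => ([ffun b => if b == a then Some e else x.1 b],
               [ffun b => [ffun b' => [&& x.2 b b', b != a & b' != a]]])
  | None => x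
  end.

Definition actY (x : rawY A) (s : {perm A}) : rawY A :=
  ([ffun a => x.1 (s a)], [ffun a => [ffun b => x.2 (s a) (s b)]]).

Definition orbitY (x : rawY A) : {set rawY A} := [set actY x s | s : {perm A}].

Definition orbits (k : nat) : {set {set rawY A}} := [set orbitY x | x in Ylev k].

Definition qfaceY (i : nat) (e : bool) (O : {set rawY A}) : {set rawY A} :=
  match [pick x in O] with Some x => orbitY (faceY i e x) | None => set0 end.

End Y.

(* Z~_n : z^k_j is encoded as the pair (k, j); Z~_n[k] = {(k,j) | j <= n - k} *)
Definition Zt (n k : nat) (z : nat * nat) : bool := (z.1 == k) && (k + z.2 <= n).
Definition zface (e : bool) (z : nat * nat) : nat * nat := (z.1.-1, z.2 + e).

Definition pA (A : finType) (x : rawY A) : nat * nat := (#|starset x|, #|oneset x|).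

Definition qpA (A : finType) (O : {set rawY A}) : nat * nat :=
  match [pick x in O] with Some x => pA x | None => (0, 0) end.

(* Main.v *)
Require Import Defs.
From mathcomp Require Import all_boot all_fingroup.
From mathcomp Require Import zify.
Set Implicit Arguments. Unset Strict Implicit. Unset Printing Implicit Defensive.

Section Proof.
Variable A : finType.
Implicit Types (x : rawY A) (s t : {perm A}).

Definition rk (a : A) : nat := enum_rank a.
Definition rlt (a b : A) := rk a < rk b.
Definition cnt (lt : A -> A -> bool) (B : {set A}) (a : A) := #|[set b in B | lt b a]|.
Definition zeroset x := [set a | x.1 a == Some false].

Section Cnt.
Variables (lt : A -> A -> bool) (B : {set A}).
Hypothesis irr : forall a, ~~ lt a a.
Hypothesis tr : forall a b d, lt a b -> lt b d -> lt a d.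
Hypothesis tot : forall a b, a \in B -> b \in B -> a != b -> lt a b || lt b a.

Lemma cnt_lt a : a \in B -> cnt lt B a < #|B|.
Proof.
move=> aB; apply: proper_card; apply/properP; split.
  by apply/subsetP => b; rewrite inE => /andP[].
by exists a => //; rewrite inE (negbTE (irr a)) andbF.
Qed.

Lemma cnt_mono a b : a \in B -> lt a b -> cnt lt B a < cnt lt B b.
Proof.
move=> aB ab; apply: proper_card; apply/properP; split.
  apply/subsetP => d; rewrite !inE => /andP[-> da] /=; exact: tr da ab.
exists a; first by rewrite inE aB ab.
by rewrite inE (negbTE (irr a)) andbF.
Qed.

Lemma cnt_inj a b : a \in B -> b \in B -> cnt lt B a = cnt lt B b -> a = b.
Proof.
move=> aB bB e; apply/eqP; apply/negPn/negP => ne.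
case/orP: (tot aB bB ne) => h.
  by have := cnt_mono aB h; rewrite e ltnn.
by have := cnt_mono bB h; rewrite e ltnn.
Qed.
End Cnt.

Lemma rlt_irr a : ~~ rlt a a. Proof. by rewrite /rlt ltnn. Qed.
Lemma rlt_tr a b d : rlt a b -> rlt b d -> rlt a d. Proof. exact: ltn_trans. Qed.
Lemma rlt_tot (B : {set A}) a b : a \in B -> b \in B -> a != b -> rlt a b || rlt b a.
Proof.
move=> _ _ ne; rewrite /rlt -neq_ltn; apply: contra ne => /eqP e.
by apply/eqP; apply: enum_rank_inj; apply: val_inj.
Qed.

Lemma inS x a : (a \in starset x) = (x.1 a == None). Proof. by rewrite inE. Qed.
Lemma inO x a : (a \in oneset x) = (x.1 a == Some true). Proof. by rewrite inE. Qed.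
Lemma inZ x a : (a \in zeroset x) = (x.1 a == Some false). Proof. by rewrite inE. Qed.

Lemma wfP x : wfY x -> [/\ forall a b, x.2 a b -> (a \in starset x) && (b \in starset x),
  forall a, ~~ x.2 a a, forall a b d, x.2 a b -> x.2 b d -> x.2 a d &
  forall a b, a \in starset x -> b \in starset x -> a != b -> x.2 a b || x.2 b a].
Proof.
case/and4P => /forallP h1 /forallP h2 /forallP h3 /forallP h4; split.
- by move=> a b; move: (h1 a) => /forallP/(_ b)/implyP.
- done.
- by move=> a b d ab bd; move: (h3 a) => /forallP/(_ b)/forallP/(_ d)/implyP; apply; rewrite ab bd.
- by move=> a b aS bS ne; move: (h4 a) => /forallP/(_ b)/implyP; apply; rewrite aS bS ne.
Qed.

Lemma wfI x : (forall a b, x.2 a b -> (a \in starset x) && (b \in starset x)) ->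
  (forall a, ~~ x.2 a a) -> (forall a b d, x.2 a b -> x.2 b d -> x.2 a d) ->
  (forall a b, a \in starset x -> b \in starset x -> a != b -> x.2 a b || x.2 b a) -> wfY x.
Proof.
move=> h1 h2 h3 h4; apply/and4P; split; apply/forallP => a.
- by apply/forallP => b; apply/implyP; apply: h1.
- exact: h2.
- by apply/forallP => b; apply/forallP => d; apply/implyP => /andP[]; apply: h3.
- by apply/forallP => b; apply/implyP => /andP[/andP[]]; apply: h4.
Qed.

Definition rho x a : nat :=
  match x.1 a with
  | None => cnt (fun a b => x.2 a b) (starset x) a
  | Some true => #|starset x| + cnt rlt (oneset x) a
  | Some false => #|starset x| + #|oneset x| + cnt rlt (zeroset x) a
  end.

Lemma card3 x : #|starset x| + #|oneset x| + #|zeroset x| = #|A|.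
Proof.
rewrite -addnA.
have -> : #|oneset x| + #|zeroset x| = #|~: starset x|.
  rewrite -(cardsID (oneset x) (~: starset x)); congr (_ + _); apply: eq_card => a;
  by rewrite !inE; case: (x.1 a) => [[]|].
by rewrite cardsC.
Qed.

Section WF.
Variable x : rawY A.
Hypothesis wf : wfY x.

Lemma cS a : x.1 a = None -> cnt (fun a b => x.2 a b) (starset x) a < #|starset x|.
Proof. by move=> E; have [_ h2 _ _] := wfP wf; apply: cnt_lt => //; rewrite inS E. Qed.
Lemma cO a : x.1 a = Some true -> cnt rlt (oneset x) a < #|oneset x|.
Proof. by move=> E; apply: cnt_lt; [exact: rlt_irr | rewrite inO E]. Qed.
Lemma cZ a : x.1 a = Some false -> cnt rlt (zeroset x) a < #|zeroset x|.
Proof. by move=> E; apply: cnt_lt; [exact: rlt_irr | rewrite inZ E]. Qed.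

Lemma rho_lt a : rho x a < #|A|.
Proof.
rewrite -(card3 x) /rho; case E: (x.1 a) => [[]|].
- by have := cO E; lia.
- by have := cZ E; lia.
- by have := cS E; lia.
Qed.

Lemma rho_inj : injective (rho x).
Proof.
have [h1 h2 h3 h4] := wfP wf.
move=> a b; rewrite /rho.
case Ea: (x.1 a) => [[]|]; case Eb: (x.1 b) => [[]|] => e;
  try (have := cS Ea); try (have := cO Ea); try (have := cZ Ea);
  try (have := cS Eb); try (have := cO Eb); try (have := cZ Eb); try lia;
  move=> *.
- apply: (@cnt_inj rlt (oneset x) rlt_irr rlt_tr (@rlt_tot _)); rewrite ?inO ?Ea ?Eb //; lia.
- apply: (@cnt_inj rlt (zeroset x) rlt_irr rlt_tr (@rlt_tot _)); rewrite ?inZ ?Ea ?Eb //; lia.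
- by apply: (@cnt_inj _ (starset x) h2 h3 h4); rewrite ?inS ?Ea ?Eb.
Qed.

Lemma rho_perm : exists s : {perm A}, forall a, rk (s a) = rho x a.
Proof.
pose f a := enum_val (Ordinal (rho_lt a) : 'I_#|A|).
have fi : injective f.
  by move=> a b /enum_val_inj /(congr1 val) /=; apply: rho_inj.
by exists (perm fi) => a; rewrite permE /rk /f enum_valK.
Qed.

Lemma rho_surj i : i < #|A| -> exists a, rho x a = i.
Proof.
move=> hi; have [s hs] := rho_perm.
exists (s^-1 (enum_val (Ordinal hi : 'I_#|A|)))%g.
by rewrite -hs permKV /rk enum_valK.
Qed.

Lemma rhoS a : (rho x a < #|starset x|) = (a \in starset x).
Proof.
rewrite inS /rho; case E: (x.1 a) => [[]|]; last by rewrite (cS E).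
- by have -> : (Some true == None) = false by []; lia.
- by have -> : (Some false == None) = false by []; lia.
Qed.

End WF.
End Proof.

Section P2.
Variable A : finType.
Implicit Types (x : rawY A) (s t : {perm A}).

Definition std (k j : nat) : rawY A :=
  ([ffun a => if rk a < k then None else Some (rk a < k + j)],
   [ffun a => [ffun b => (rk a < rk b) && (rk b < k)]]).

Lemma canon x : wfY x -> exists s, x = actY (std #|starset x| #|oneset x|) s.
Proof.
move=> wf; have [h1 h2 h3 h4] := wfP wf; have [s hs] := rho_perm wf.
exists s; rewrite /actY; case: x wf h1 h2 h3 h4 hs => c r wf h1 h2 h3 h4 hs /=.
have cS' := cS wf; have cO' := @cO _ (c, r); have cZ' := @cZ _ (c, r).
rewrite /= in cS' cO' cZ'.
congr pair.
{ apply/ffunP => a; rewrite !ffunE hs /rho /=.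
  case E: (c a) => [[]|].
  - have := cO' a E; move=> h.
    have -> : (#|starset (c, r)| + cnt (@rlt A) (oneset (c, r)) a < #|starset (c, r)|) = false by lia.
    by have -> : (#|starset (c, r)| + cnt (@rlt A) (oneset (c, r)) a < #|starset (c, r)| + #|oneset (c, r)|) by lia.
  - have := cZ' a E; move=> h.
    have -> : (#|starset (c, r)| + #|oneset (c, r)| + cnt (@rlt A) (zeroset (c, r)) a < #|starset (c, r)|) = false by lia.
    by have -> : (#|starset (c, r)| + #|oneset (c, r)| + cnt (@rlt A) (zeroset (c, r)) a < #|starset (c, r)| + #|oneset (c, r)|) = false by lia.
  - by rewrite (cS' a E). }
apply/ffunP => a; apply/ffunP => b; rewrite !ffunE !hs.
have rS d : (rho (c, r) d < #|starset (c, r)|) = (d \in starset (c, r)) by exact: rhoS.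
case Hab: (r a b).
  have /andP[aS bS] := h1 _ _ Hab.
  rewrite rS bS andbT /rho.
  move: (aS) (bS); rewrite !inS /= => /eqP -> /eqP ->.
  by rewrite (@cnt_mono _ _ (starset (c, r)) h2 h3 _ _ aS Hab).
apply/esym/negbTE/negP => /andP[lt1 lt2].
have bS : b \in starset (c, r) by rewrite -rS.
have aS : a \in starset (c, r) by rewrite -rS; exact: ltn_trans lt1 lt2.
have ne : a != b by apply: contraTneq lt1 => ->; rewrite ltnn.
have := h4 _ _ aS bS ne; rewrite Hab /= => hba.
have := (@cnt_mono _ _ (starset (c, r)) h2 h3 _ _ bS hba).
move: lt1; rewrite /rho; move: (aS) (bS); rewrite !inS /= => /eqP -> /eqP ->.
lia.
Qed.
End P2.

Section P3.
Variable A : finType.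
Implicit Types (x : rawY A) (s t : {perm A}).

Lemma starset_act x s : starset (actY x s) = s @^-1: starset x.
Proof. by apply/setP => a; rewrite !inE ffunE. Qed.
Lemma oneset_act x s : oneset (actY x s) = s @^-1: oneset x.
Proof. by apply/setP => a; rewrite !inE ffunE. Qed.

Lemma pA_act x s : pA (actY x s) = pA x.
Proof. by rewrite /pA starset_act oneset_act !card_preimset //; exact: perm_inj. Qed.

Lemma wf_act x s : wfY x -> wfY (actY x s).
Proof.
move=> wf; have [h1 h2 h3 h4] := wfP wf.
apply: wfI; rewrite ?starset_act /=.
- by move=> a b; rewrite /= !ffunE !inE => /h1; rewrite !inS.
- by move=> a; rewrite !ffunE.
- by move=> a b d; rewrite !ffunE; apply: h3.
- move=> a b; rewrite !inE /= !ffunE => aS bS ne; apply: h4; rewrite ?inS //.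
  by apply: contra ne => /eqP /perm_inj ->.
Qed.

Lemma lev_act k x s : x \in Ylev A k -> actY x s \in Ylev A k.
Proof.
rewrite !inE => /andP[wf hk]; rewrite wf_act //=.
by rewrite starset_act card_preimset //; exact: perm_inj.
Qed.

Lemma actYM x s t : actY (actY x s) t = actY x (t * s).
Proof.
rewrite /actY /=; congr pair; apply/ffunP => a; rewrite !ffunE ?permM //.
by apply/ffunP => b; rewrite !ffunE !permM.
Qed.

Lemma actY1 x : actY x 1 = x.
Proof.
case: x => c r; rewrite /actY /=; congr pair; apply/ffunP => a; rewrite !ffunE ?perm1 //.
by apply/ffunP => b; rewrite !ffunE !perm1.
Qed.

Lemma orbitY_act x s : orbitY (actY x s) = orbitY x.
Proof.
apply/setP => y; apply/imsetP/imsetP => [[t _ ->] | [t _ ->]].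
  by exists (t * s)%g => //; rewrite actYM.
exists (t * s^-1)%g => //; rewrite actYM -mulgA mulVg mulg1 //.
Qed.

Lemma in_orbitY x : x \in orbitY x.
Proof. by apply/imsetP; exists 1%g => //; rewrite actY1. Qed.

Lemma qpA_orbit x : qpA (orbitY x) = pA x.
Proof.
rewrite /qpA; case: pickP => [y /imsetP[t _ ->] | none]; first exact: pA_act.
by have := none x; rewrite in_orbitY.
Qed.

Lemma face_lev x k i e : x \in Ylev A k -> i < k ->
  faceY i e x \in Ylev A k.-1 /\ pA (faceY i e x) = zface e (pA x).
Proof.
rewrite inE => /andP[wf /eqP hk] hi.
have [h1 h2 h3 h4] := wfP wf.
have [a [ha aS]] : exists a, ith i x = Some a /\ a \in starset x.
  rewrite /ith; case: pickP => [a /andP[aS _] | none]; first by exists a.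
  have hS : #|starset x| <= #|A| by exact: max_card.
  have hiA : i < #|A| by apply: leq_trans hS; rewrite hk.
  have [a ha] := rho_surj wf hiA.
  have aS : a \in starset x by rewrite -(rhoS wf) ha hk.
  have := none a; rewrite aS /=.
  have -> : [set b | x.2 b a] = [set b in starset x | x.2 b a].
    apply/setP => b; rewrite !inE; case E: (x.2 b a); rewrite ?andbF //.
    by have /andP[/[!inS] -> _] := h1 _ _ E.
  move: ha; rewrite /rho; move: (aS); rewrite inS => /eqP -> . rewrite /cnt /= => ->. by rewrite eqxx.
have aS' := aS; rewrite inS in aS'; move/eqP: aS' => aN.
rewrite /faceY ha.
set y := (_, _).
have Sy : starset y = starset x :\ a.
  apply/setP => b; rewrite !inE /= ffunE; case: (b =P a) => [->|ne] /=; first by rewrite ?eqxx ?aN.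
  done.
have Oy : oneset y = if e then a |: oneset x else oneset x.
  apply/setP => b; rewrite !inE /= ffunE; case: (b =P a) => [->|/eqP/negbTE ne];
    case: (e); rewrite ?inE ?eqxx ?aN ?ne //=.
have hcard := cardsD1 a (starset x); rewrite aS hk in hcard.
split.
  rewrite inE Sy; apply/andP; split; last by apply/eqP; lia.
  apply: wfI; rewrite ?Sy /=.
  - move=> b b'; rewrite !ffunE !inE => /and3P[hb ba b'a].
    by have := h1 _ _ hb; rewrite !inS => /andP[-> ->]; rewrite ba b'a.
  - by move=> b; rewrite !ffunE (negbTE (h2 b)).
  - move=> b b' d; rewrite !ffunE => /and3P[h ba _] /and3P[h' _ da].
    by rewrite (h3 _ _ _ h h') ba da.
  - move=> b b'; rewrite !inE !ffunE => /andP[ba bS] /andP[b'a b'S] ne.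
    by rewrite ba b'a /= !andbT; apply: h4; rewrite ?inS.
rewrite /pA Sy Oy /zface /=; congr pair; first lia.
case: (e); rewrite ?cardsU1 ?inO ?aN /=; lia.
Qed.
End P3.

Section P4.
Variable A : finType.
Implicit Types (x : rawY A) (s t : {perm A}).

Lemma card_rk m : m <= #|A| -> #|[set a : A | rk a < m]| = m.
Proof.
move=> hm.
have -> : [set a : A | rk a < m] = [set enum_val (widen_ord hm i) | i : 'I_m].
  apply/setP => a; rewrite inE; apply/idP/imsetP => [h | [i _ ->]].
    exists (Ordinal h) => //; apply: enum_rank_inj; rewrite enum_valK; exact: val_inj.
  by rewrite /rk enum_valK /=.
rewrite card_imset ?card_ord //.
by move=> i i' /enum_val_inj /(congr1 val) /= e; apply: val_inj.
Qed.

Lemma std_lev k j : k + j <= #|A| -> std A k j \in Ylev A k /\ pA (std A k j) = (k, j).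
Proof.
move=> hkj.
have SS : starset (std A k j) = [set a | rk a < k].
  by apply/setP => a; rewrite !inE ffunE; case: (rk a < k).
have OO : oneset (std A k j) = [set a | rk a < k + j] :\: [set a | rk a < k].
  by apply/setP => a; rewrite !inE ffunE; case: (rk a < k).
split; last first.
  rewrite /pA SS OO card_rk; last lia.
  rewrite cardsD card_rk; last lia.
  have -> : [set a | rk a < k + j] :&: [set a : A | rk a < k] = [set a | rk a < k].
    by apply/setP => a; rewrite !inE; case h: (rk a < k) => //=; rewrite ?andbT ?andbF; lia.
  by rewrite card_rk; [congr pair; lia | lia].
rewrite inE SS card_rk ?eqxx ?andbT; last lia.
apply: wfI; rewrite ?SS /=.
- by move=> a b; rewrite !ffunE !inE => /andP[h1 h2]; apply/andP; split; lia.
- by move=> a; rewrite !ffunE ltnn.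
- by move=> a b d; rewrite !ffunE => /andP[h1 h2] /andP[h3 h4]; apply/andP; split; lia.
- move=> a b; rewrite !inE !ffunE => ha hb ne.
  have : rk a != rk b.
    by apply: contra ne => /eqP e; apply/eqP; apply: enum_rank_inj; apply: val_inj.
  by rewrite ha hb; lia.
Qed.
End P4.

Theorem proposition2p16 (A : finType) (n : nat) (hA : #|A| = n) :
  (* p_A maps Y^A[k] into Z~_n[k] *)
  (forall k x, x \in Ylev A k -> Zt n k (pA x)) /\
  (* p_A is a square-map: it commutes with the face maps d^e_{i+1}, 0 <= i < k *)
  (forall k x i e, x \in Ylev A k -> i < k ->
     pA (faceY i e x) = zface e (pA x)) /\
  (* p_A is Sigma_A-invariant *)
  (forall k x (s : {perm A}), x \in Ylev A k -> pA (actY x s) = pA x) /\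
  (* the induced map Y^A/Sigma_A -> Z~_n is a square-map ... *)
  (forall k O i e, O \in orbits A k -> i < k ->
     qfaceY i e O \in orbits A k.-1 /\ qpA (qfaceY i e O) = zface e (qpA O)) /\
  (* ... which is bijective in every degree k: lands in Z~_n[k], *)
  (forall k O, O \in orbits A k -> Zt n k (qpA O)) /\
  (* is injective on (Y^A/Sigma_A)[k], *)
  (forall k, {in orbits A k &, injective (@qpA A)}) /\
  (* and is surjective onto Z~_n[k]. *)
  (forall k z, Zt n k z -> exists2 O, O \in orbits A k & qpA O = z).
Proof.
have P1 : forall k x, x \in Ylev A k -> Zt n k (pA x).
  move=> k x; rewrite inE => /andP[wf /eqP hk].
  rewrite /Zt /pA /= hk eqxx /= -hA -(card3 x) hk; lia.
split; first exact: P1.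
split; first by move=> k x i e hx hi; case: (face_lev e hx hi).
split; first by move=> k x s _; exact: pA_act.
split.
  move=> k O i e /imsetP[x hx ->] hi.
  rewrite /qfaceY; case: pickP => [y /imsetP[t _ ->] | none]; last first.
    by have := none x; rewrite in_orbitY.
  have hy := lev_act t hx.
  have [h1 h2] := face_lev e hy hi.
  split; first by apply/imsetP; exists (faceY i e (actY x t)).
  by rewrite !qpA_orbit h2 pA_act.
split.
  by move=> k O /imsetP[x hx ->]; rewrite qpA_orbit; exact: P1.
split.
  move=> k O1 O2 /imsetP[x1 h1 ->] /imsetP[x2 h2 ->]; rewrite !qpA_orbit /pA => [[e1 e2]].
  move: h1 h2; rewrite !inE => /andP[w1 _] /andP[w2 _].
  have [s1 ->] := canon w1; have [s2 ->] := canon w2.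
  by rewrite !orbitY_act e1 e2.
move=> k [k' j]; rewrite /Zt /= => /andP[/eqP -> hkj].
have hkj2 : k + j <= #|A| by rewrite hA.
have [hl hp] := std_lev hkj2.
by exists (orbitY (std A k j)); [apply/imsetP; exists (std A k j) | rewrite qpA_orbit].
Qed.
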